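(* Let $\Pi$ be an $n$-dimensional linear space satisfying the exchange axiom and let $S$ and $U$ be distinct subspaces of $\Pi$. The following are equivalent: (1) there exists a base of $\Pi$ such that both $S$ and $U$ are spanned by points of this base; (2) $\dim\overline{S\cup U}=\dim S+\dim U-\dim(S\cap U)$.
   Context: A linear space $\Pi=(P,\mathcal{L})$ is a set $P$ of points with a family $\mathcal{L}$ of proper subsets (lines) such that each line has at least two points and any two distinct points $p,q$ lie on exactly one line $pq$. A subspace is a set $S\subset P$ with $pq\subset S$ for all distinct $p,q\in S$; $\overline{X}$ is the smallest subspace containing $X$. A set $X$ is independent if $\overline{X}$ is not spanned by a proper subset of $X$; a base of $\Pi$ is an independent set spanning $P$. A subspace is $m$-dimensional if $m+1$ is the smallest number of points spanning it (the empty set is $(-1)$-dimensional). Exchange axiom: for every $X\subset P$ and $p_1,p_2\in P\setminus\overline{X}$, $p_2\in\overline{X\cup\{p_1\}}$ implies $p_1\in\overline{X\cup\{p_2\}}$. *)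

(* Defs.v *)
From Stdlib Require Import List ZArith.
Import ListNotations.

Section LinSpace.
Context {P : Type}.

Definition sub (X Y : P -> Prop) : Prop := forall x, X x -> Y x.
Definition seteq (X Y : P -> Prop) : Prop := forall x, X x <-> Y x.

Definition linear_space (L : (P -> Prop) -> Prop) : Prop :=
  (forall l, L l -> exists p, ~ l p) /\
  (forall l, L l -> exists p q, p <> q /\ l p /\ l q) /\
  (forall p q, p <> q -> exists l, L l /\ l p /\ l q /\
       forall l', L l' -> l' p -> l' q -> seteq l' l).

Definition subspace (L : (P -> Prop) -> Prop) (S : P -> Prop) : Prop :=
  forall p q l, S p -> S q -> p <> q -> L l -> l p -> l q -> sub l S.

Definition closure (L : (P -> Prop) -> Prop) (X : P -> Prop) : P -> Prop :=
  fun x => forall S, subspace L S -> sub X S -> S x.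

Definition independent (L : (P -> Prop) -> Prop) (X : P -> Prop) : Prop :=
  ~ exists Y, sub Y X /\ (exists x, X x /\ ~ Y x) /\
      seteq (closure L Y) (closure L X).

Definition base (L : (P -> Prop) -> Prop) (B : P -> Prop) : Prop :=
  independent L B /\ seteq (closure L B) (fun _ => True).

Definition has_dim (L : (P -> Prop) -> Prop) (S : P -> Prop) (m : Z) : Prop :=
  (exists l : list P, NoDup l /\ Z.of_nat (length l) = (m + 1)%Z /\
      seteq (closure L (fun x => In x l)) S) /\
  (forall l : list P, seteq (closure L (fun x => In x l)) S ->
      (m + 1 <= Z.of_nat (length l))%Z).

Definition exchange_axiom (L : (P -> Prop) -> Prop) : Prop :=
  forall (X : P -> Prop) p1 p2,
    ~ closure L X p1 -> ~ closure L X p2 ->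
    closure L (fun x => X x \/ x = p1) p2 ->
    closure L (fun x => X x \/ x = p2) p1.

End LinSpace.

(* Main.v *)
Require Import Defs.
From Stdlib Require Import List ZArith.
From Stdlib Require Import Classical Lia.
Import ListNotations.

Ltac sset := let z := fresh "z" in let Hz := fresh "Hz" in
  intros z Hz; simpl in *; repeat rewrite in_app_iff in *; simpl in *;
  repeat match goal with H: _ \/ _ |- _ => destruct H | H : _ /\ _ |- _ => destruct H end;
  subst; intuition auto.

Fixpoint freeC {P : Type} (L : (P -> Prop) -> Prop) (C : P -> Prop) (l : list P) : Prop :=
  match l with
  | [] => True
  | x :: l' => ~ closure L (fun z => C z \/ In z l') x /\ freeC L (fun z => C z \/ z = x) l'
  end.

Lemma cl_in {P} L (X : P -> Prop) x : X x -> closure L X x.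
Proof. intros H S _ HS. apply HS, H. Qed.

Lemma cl_mono {P} L (X Y : P -> Prop) : (forall z, X z -> Y z) -> forall x, closure L X x -> closure L Y x.
Proof. intros H x Hx S HSs HYS. apply Hx; auto. intros z Hz; apply HYS, H, Hz. Qed.

Lemma cl_subspace {P} L (X : P -> Prop) : subspace L (closure L X).
Proof.
  intros p q l Hp Hq Hpq Hl Hlp Hlq z Hz S HS HXS.
  exact (HS p q l (Hp S HS HXS) (Hq S HS HXS) Hpq Hl Hlp Hlq z Hz).
Qed.

Lemma cl_least {P} L (X S : P -> Prop) : subspace L S -> (forall z, X z -> S z) -> forall x, closure L X x -> S x.
Proof. intros HS H x Hx. apply Hx; auto. Qed.

Lemma cl_min {P} L (X Y : P -> Prop) : (forall z, X z -> closure L Y z) -> forall x, closure L X x -> closure L Y x.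
Proof. intros H. apply cl_least; [apply cl_subspace | exact H]. Qed.

Lemma subspace_inter {P} L (S U : P -> Prop) : subspace L S -> subspace L U -> subspace L (fun x => S x /\ U x).
Proof.
  intros HS HU p q l [Hp1 Hp2] [Hq1 Hq2] Hpq Hl Hlp Hlq z Hz.
  split; [exact (HS p q l Hp1 Hq1 Hpq Hl Hlp Hlq z Hz)|exact (HU p q l Hp2 Hq2 Hpq Hl Hlp Hlq z Hz)].
Qed.

Lemma subspace_full {P} L : subspace L (fun _ : P => True).
Proof. intros p q l _ _ _ _ _ _ z _; exact I. Qed.

Lemma exch_list {P} L (Hex : exchange_axiom L) : forall (m : list P) C x,
  closure L (fun z => C z \/ In z m) x -> ~ closure L C x ->
  exists m1 y m2, m = m1 ++ y :: m2 /\ closure L (fun z => (C z \/ z = x) \/ In z (m1 ++ m2)) y.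
Proof.
  induction m as [|y m IH]; intros C x Hx HC.
  - exfalso; apply HC; revert Hx; apply cl_mono; sset.
  - destruct (classic (closure L (fun z => C z \/ z = y) x)) as [H1|H1].
    + assert (Hy : ~ closure L C y).
      { intro Hy. apply HC. revert H1. apply cl_min. intros z [Hz|Hz]; [apply cl_in; auto | subst; auto]. }
      exists [], y, m. split; [reflexivity|].
      pose proof (Hex C y x Hy HC H1) as H2. revert H2; apply cl_mono; sset.
    + destruct (IH (fun z => C z \/ z = y) x) as (m1 & y' & m2 & Hm & Hy').
      * revert Hx; apply cl_mono; sset.
      * intro H; apply H1; revert H; apply cl_mono; sset.
      * exists (y :: m1), y', m2. split; [subst; reflexivity|]. revert Hy'; apply cl_mono; sset.
Qed.

Lemma freeC_anti {P} L : forall (l : list P) C C', (forall z, C z -> C' z) -> freeC L C' l -> freeC L C l.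
Proof.
  induction l as [|a l IH]; simpl; intros C C' H Hf; auto. destruct Hf as [H1 H2]. split.
  - intro H3; apply H1; revert H3; apply cl_mono; intros z [Hz|Hz]; auto.
  - apply (IH _ (fun z => C' z \/ z = a)); auto. intros z [Hz|Hz]; auto.
Qed.

Lemma steinitz {P} L (Hex : exchange_axiom L) : forall (l : list P) C m, freeC L C l ->
  (forall z, In z l -> closure L (fun w => C w \/ In w m) z) -> length l <= length m.
Proof.
  induction l as [|x l IH]; intros C m Hf Hsub; simpl; [lia|].
  destruct Hf as [Hx Hf].
  assert (HxC : ~ closure L C x) by (intro H; apply Hx; revert H; apply cl_mono; sset).
  destruct (exch_list L Hex m C x (Hsub x (or_introl eq_refl)) HxC) as (m1 & y & m2 & Hm & Hy).
  subst m.
  assert (H : length l <= length (m1 ++ m2)).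
  { apply (IH _ _ Hf). intros z Hz.
    apply (cl_min L (fun w => C w \/ In w (m1 ++ y :: m2))).
    - intros w Hw. destruct Hw as [Hw|Hw]. apply cl_in; left; left; auto.
      rewrite in_app_iff in Hw; simpl in Hw. destruct Hw as [Hw|[Hw|Hw]].
      + apply cl_in; right; apply in_app_iff; auto.
      + subst; exact Hy.
      + apply cl_in; right; apply in_app_iff; auto.
    - apply Hsub; right; auto. }
  rewrite length_app in *; simpl; lia.
Qed.

Lemma free_cons_aux {P} L (Hex : exchange_axiom L) : forall (l : list P) C z, freeC L C l ->
  ~ closure L (fun w => C w \/ In w l) z -> freeC L (fun w => C w \/ w = z) l.
Proof.
  induction l as [|x l IH]; simpl; intros C z Hf Hz; auto. destruct Hf as [Hx Hf]. split.
  - intro H. apply Hz.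
    assert (Hz' : ~ closure L (fun w => C w \/ In w l) z) by (intro H'; apply Hz; revert H'; apply cl_mono; sset).
    pose proof (Hex (fun w => C w \/ In w l) z x Hz' Hx) as E.
    assert (H'' : closure L (fun w => (C w \/ In w l) \/ w = z) x) by (revert H; apply cl_mono; sset).
    specialize (E H''). revert E; apply cl_mono; sset.
  - apply (freeC_anti L l _ (fun w => (C w \/ w = x) \/ w = z)). sset.
    apply IH; auto. intro H; apply Hz; revert H; apply cl_mono; sset.
Qed.

Lemma free_cons {P} L (Hex : exchange_axiom L) : forall (l : list P) C z, freeC L C l ->
  ~ closure L (fun w => C w \/ In w l) z -> freeC L C (z :: l).
Proof. intros; split; auto. apply free_cons_aux; auto. Qed.

Lemma free_nodup {P} L : forall (l : list P) C, freeC L C l -> NoDup l.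
Proof.
  induction l as [|x l IH]; intros C Hf; constructor; destruct Hf as [Hx Hf].
  - intro Hin; apply Hx; apply cl_in; right; auto.
  - eapply IH; eauto.
Qed.

Lemma free_elem {P} L : forall (l : list P) C x, freeC L C l -> In x l ->
  ~ closure L (fun z => C z \/ (In z l /\ z <> x)) x.
Proof.
  induction l as [|y l IH]; intros C x Hf Hin; [destruct Hin|].
  destruct Hf as [Hy Hf]. destruct (classic (x = y)) as [->|Hne].
  - intro H; apply Hy; revert H; apply cl_mono. simpl.
    intros z [Hz|[[Hz1|Hz1] Hz2]]; [left; auto| congruence | right; auto].
  - destruct Hin as [Hin|Hin]; [congruence|]. intro H. apply (IH _ x Hf Hin).
    revert H; apply cl_mono. simpl.
    intros z [Hz|[[Hz1|Hz1] Hz2]]; [left; left; auto| left; right; auto | right; auto].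
Qed.

Lemma nonfree_short {P} L : forall (l : list P) C, ~ freeC L C l ->
  exists l', length l' < length l /\ incl l' l /\
    (forall z, In z l -> closure L (fun w => C w \/ In w l') z).
Proof.
  induction l as [|x l IH]; intros C Hnf; [exfalso; apply Hnf; exact I|].
  destruct (classic (closure L (fun w => C w \/ In w l) x)) as [Hx|Hx].
  - exists l. split; [simpl; lia|]. split; [intros z Hz; right; auto|].
    intros z [<-|Hz]; auto. apply cl_in; right; auto.
  - assert (Hnf' : ~ freeC L (fun w => C w \/ w = x) l) by (intro H; apply Hnf; split; auto).
    destruct (IH _ Hnf') as (l' & Hlen & Hincl & Hsp). exists (x :: l').
    split; [simpl; lia|]. split.
    + intros z [<-|Hz]; [left; auto| right; auto].
    + intros z [<-|Hz]. apply cl_in; right; left; auto.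
      specialize (Hsp z Hz). revert Hsp; apply cl_mono; sset.
Qed.

Lemma meet {P} L (Hex : exchange_axiom L) : forall (a : list P) C D z,
  freeC L (fun w => C w \/ D w) a -> closure L (fun w => C w \/ In w a) z ->
  closure L (fun w => C w \/ D w) z -> closure L C z.
Proof.
  induction a as [|x a IH]; intros C D z Hf Ha Hd.
  - revert Ha; apply cl_mono; sset.
  - destruct Hf as [Hx Hf]. apply (IH C D z); [eapply freeC_anti; [|exact Hf]; sset| |exact Hd].
    destruct (classic (closure L (fun w => C w \/ In w a) z)) as [H|H]; [exact H|]. exfalso.
    assert (Hx' : ~ closure L (fun w => C w \/ In w a) x) by (intro H'; apply Hx; revert H'; apply cl_mono; sset).
    assert (E := Hex (fun w => C w \/ In w a) x z Hx' H).
    assert (E2 : closure L (fun w => (C w \/ In w a) \/ w = x) z) by (revert Ha; apply cl_mono; sset).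
    specialize (E E2). apply Hx. revert E. apply cl_min. intros w [[Hw|Hw]|Hw].
    + apply cl_in; left; left; auto.
    + apply cl_in; right; auto.
    + subst w. revert Hd; apply cl_mono; sset.
Qed.

Lemma fromB {P} L (B : P -> Prop) : (forall x, B x -> ~ closure L (fun z => B z /\ z <> x) x) ->
  forall l C, NoDup l -> (forall z, In z l -> B z) -> (forall z, C z -> B z) ->
  (forall z, C z -> ~ In z l) -> freeC L C l.
Proof.
  intros HB. induction l as [|x l IH]; intros C Hnd HlB HCB Hdis; simpl; auto.
  inversion Hnd as [|? ? Hnin Hnd']; subst. split.
  - intro H. apply (HB x (HlB x (or_introl eq_refl))). revert H; apply cl_mono.
    intros z [Hz|Hz].
    + split; auto. intro; subst; apply (Hdis x Hz); left; auto.
    + split. apply HlB; right; auto. intro; subst; auto.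
  - apply IH; auto.
    + intros z Hz; apply HlB; right; auto.
    + intros z [Hz|Hz]; [auto| subst; apply HlB; left; auto].
    + intros z [Hz|Hz]; [intro; apply (Hdis z Hz); right; auto | subst; auto].
Qed.

Lemma enum {P} (X : P -> Prop) N : (forall l, NoDup l -> (forall z, In z l -> X z) -> length l <= N) ->
  exists l, NoDup l /\ forall x, In x l <-> X x.
Proof.
  intros Hb.
  assert (K : forall k l, N < length l + k -> NoDup l -> (forall z, In z l -> X z) ->
     exists l', NoDup l' /\ forall x, In x l' <-> X x).
  { induction k as [|k IH]; intros l Hk Hnd Hl.
    - specialize (Hb l Hnd Hl); lia.
    - destruct (classic (forall x, X x -> In x l)) as [H|H].
      + exists l; split; auto; split; auto.
      + apply not_all_ex_not in H. destruct H as [z Hz]. apply imply_to_and in Hz.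
        destruct Hz as [Hz1 Hz2]. apply (IH (z :: l)); simpl; [lia| constructor; auto| intros w [<-|Hw]; auto]. }
  apply (K (S N) []); simpl; [lia| constructor | intros z []].
Qed.

Lemma ext {P} L (Hex : exchange_axiom L) (T C : P -> Prop) N :
  (forall l, freeC L C l -> length l <= N) -> forall l, freeC L C l -> (forall z, In z l -> T z) ->
  exists m, freeC L C (m ++ l) /\ (forall z, In z m -> T z) /\
    (forall z, T z -> closure L (fun w => C w \/ In w (m ++ l)) z).
Proof.
  intros Hb.
  assert (K : forall k l, N < length l + k -> freeC L C l -> (forall z, In z l -> T z) ->
    exists m, freeC L C (m ++ l) /\ (forall z, In z m -> T z) /\
    (forall z, T z -> closure L (fun w => C w \/ In w (m ++ l)) z)).
  { induction k as [|k IH]; intros l Hk Hf Hl.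
    - specialize (Hb l Hf); lia.
    - destruct (classic (forall z, T z -> closure L (fun w => C w \/ In w l) z)) as [H|H].
      + exists []; simpl; split; auto; split; auto. intros z [].
      + apply not_all_ex_not in H. destruct H as [z Hz]. apply imply_to_and in Hz.
        destruct Hz as [Hz1 Hz2].
        destruct (IH (z :: l)) as (m & Hm1 & Hm2 & Hm3).
        * simpl; lia.
        * apply free_cons; auto.
        * intros w [<-|Hw]; auto.
        * exists (m ++ [z]). rewrite <- app_assoc; simpl. split; auto. split; auto.
          intros w Hw. rewrite in_app_iff in Hw. destruct Hw as [Hw|[<-|[]]]; auto. }
  intros l. apply (K (S N) l). lia.
Qed.

Lemma dim_free {P} L (Hex : exchange_axiom L) (l : list P) T :
  freeC L (fun _ => False) l -> (forall x, closure L (fun z => In z l) x <-> T x) ->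
  has_dim L T (Z.of_nat (length l) - 1).
Proof.
  intros Hf H. split.
  - exists l; split; [eapply free_nodup; eauto|]; split; [lia|exact H].
  - intros m Hm. assert (length l <= length m).
    { apply (steinitz L Hex l (fun _ => False) m Hf). intros z Hz.
      apply (cl_mono L (fun w => In w m)); [sset|]. apply (proj2 (Hm z)), (proj1 (H z)), cl_in, Hz. }
    lia.
Qed.

Lemma dim_eq {P} L (T : P -> Prop) d d' : has_dim L T d -> has_dim L T d' -> d = d'.
Proof.
  intros [[l [_ [Hl Hs]]] Hm] [[l' [_ [Hl' Hs']]] Hm'].
  specialize (Hm l' Hs'); specialize (Hm' l Hs). lia.
Qed.

Theorem proposition2p3 (P : Type) (L : (P -> Prop) -> Prop) (n : Z)
  (HL : linear_space L) (Hex : exchange_axiom L)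
  (Hdim : has_dim L (fun _ : P => True) n)
  (S U : P -> Prop) (HS : subspace L S) (HU : subspace L U)
  (HSU : ~ seteq S U) :
  (exists B : P -> Prop, base L B /\
     (exists X, sub X B /\ seteq (closure L X) S) /\
     (exists Y, sub Y B /\ seteq (closure L Y) U))
  <->
  (exists dJ dS dU dI : Z,
     has_dim L (closure L (fun x => S x \/ U x)) dJ /\
     has_dim L S dS /\ has_dim L U dU /\
     has_dim L (fun x => S x /\ U x) dI /\
     dJ = (dS + dU - dI)%Z).
Proof.
  destruct Hdim as [[m0 [_ [Hm0len Hm0sp]]] _].
  assert (Hbound : forall C l, freeC L C l -> length l <= length m0).
  { intros C l Hf. apply (steinitz L Hex l (fun _ => False) m0).
    - eapply freeC_anti; [|exact Hf]; intros z [].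
    - intros z _. apply (cl_mono L (fun w => In w m0)); [sset|]. apply Hm0sp; exact I. }
  split.
  - intros (B & [HBi HBs] & (X & HXB & HXS) & (Y & HYB & HYU)).
    unfold sub, seteq in *.
    assert (HB : forall x, B x -> ~ closure L (fun z => B z /\ z <> x) x).
    { intros x Hx H. apply HBi. exists (fun z => B z /\ z <> x).
      split; [intros z [Hz _]; auto|].
      split; [exists x; split; auto; intros [_ Hc]; apply Hc; auto|].
      intro z; split; [apply cl_mono; intros w [Hw _]; auto|].
      apply cl_min; intros w Hw; destruct (classic (w = x)) as [->|Hne]; [exact H| apply cl_in; split; auto]. }
    assert (Hnb : forall (Z : P -> Prop), (forall z, Z z -> B z) -> forall l, NoDup l ->
              (forall z, In z l -> Z z) -> length l <= length m0).
    { intros Z HZ l Hnd Hl. apply (Hbound (fun _ => False)). apply (fromB L B HB); auto; intros z []. }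
    destruct (enum X _ (Hnb X HXB)) as (lX & HndX & HlX).
    destruct (enum Y _ (Hnb Y HYB)) as (lY & HndY & HlY).
    destruct (enum (fun z => X z /\ Y z) _ (Hnb _ (fun z Hz => HXB z (proj1 Hz)))) as (lI & HndI & HlI).
    destruct (enum (fun z => X z /\ ~ Y z) _ (Hnb _ (fun z Hz => HXB z (proj1 Hz)))) as (lA & HndA & HlA).
    assert (HfreeB : forall l, NoDup l -> (forall z, In z l -> B z) -> freeC L (fun _ => False) l).
    { intros l Hnd Hl; apply (fromB L B HB); auto; intros z []. }
    assert (HndIA : NoDup (lI ++ lA)).
    { apply NoDup_app; auto. intros z Ha Hb. apply HlI in Ha; apply HlA in Hb. tauto. }
    assert (HndAY : NoDup (lA ++ lY)).
    { apply NoDup_app; auto. intros z Ha Hb. apply HlA in Ha; apply HlY in Hb. tauto. }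
    assert (HlenX : length lX = length lI + length lA).
    { rewrite <- length_app. apply Nat.le_antisymm; apply NoDup_incl_length; auto; intros z Hz;
        rewrite ?in_app_iff in *.
      - apply HlX in Hz. destruct (classic (Y z)); [left; apply HlI | right; apply HlA]; tauto.
      - apply HlX. destruct Hz as [Hz|Hz]; [apply HlI in Hz|apply HlA in Hz]; tauto. }
    exists (Z.of_nat (length (lA ++ lY)) - 1)%Z, (Z.of_nat (length lX) - 1)%Z,
           (Z.of_nat (length lY) - 1)%Z, (Z.of_nat (length lI) - 1)%Z.
    split; [|split; [|split; [|split]]].
    + apply (dim_free L Hex).
      { apply HfreeB; auto. intros z Hz; rewrite in_app_iff in Hz; destruct Hz as [Hz|Hz];
          [apply HlA in Hz|apply HlY in Hz]; [apply HXB|apply HYB]; tauto. }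
      intros x; split.
      * apply cl_min. intros w Hw. rewrite in_app_iff in Hw. apply cl_in.
        destruct Hw as [Hw|Hw]; [left; apply (proj1 (HXS w)); apply cl_in; apply HlA in Hw; tauto | right; apply (proj1 (HYU w)); apply cl_in; apply HlY, Hw].
      * apply cl_min. intros w [Hw|Hw].
        -- apply (proj2 (HXS _)) in Hw. revert Hw; apply cl_mono. intros v Hv. apply in_app_iff.
           destruct (classic (Y v)); [right; apply HlY; auto| left; apply HlA; auto].
        -- apply (proj2 (HYU _)) in Hw. revert Hw; apply cl_mono. intros v Hv. apply in_app_iff; right; apply HlY; auto.
    + apply (dim_free L Hex). apply HfreeB; auto. intros z Hz; apply HXB, HlX, Hz.
      intro x; split; intro H.
      * apply (proj1 (HXS _)); revert H; apply cl_mono; intros v Hv; apply HlX; auto.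
      * apply (proj2 (HXS _)) in H; revert H; apply cl_mono; intros v Hv; apply HlX; auto.
    + apply (dim_free L Hex). apply HfreeB; auto. intros z Hz; apply HYB, HlY, Hz.
      intro x; split; intro H.
      * apply (proj1 (HYU _)); revert H; apply cl_mono; intros v Hv; apply HlY; auto.
      * apply (proj2 (HYU _)) in H; revert H; apply cl_mono; intros v Hv; apply HlY; auto.
    + apply (dim_free L Hex). apply HfreeB; auto. intros z Hz; apply HlI in Hz; apply HXB; tauto.
      intro x; split.
      * intro H; split; [apply (proj1 (HXS _))|apply (proj1 (HYU _))]; revert H; apply cl_mono; intros v Hv; apply HlI in Hv; tauto.
      * intros [Hs Hu]. apply (meet L Hex lA (fun w => In w lI) (fun w => In w lY)).
        -- apply (fromB L B HB); auto.
           ++ intros z Hz; apply HlA in Hz; apply HXB; tauto.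
           ++ intros z [Hz|Hz]; [apply HlI in Hz; apply HXB; tauto | apply HlY in Hz; apply HYB; auto].
           ++ intros z [Hz|Hz] Hz'; apply HlA in Hz'; [apply HlI in Hz|apply HlY in Hz]; tauto.
        -- apply (proj2 (HXS _)) in Hs. revert Hs; apply cl_mono. intros v Hv.
           destruct (classic (Y v)); [left; apply HlI; auto | right; apply HlA; auto].
        -- apply (proj2 (HYU _)) in Hu. revert Hu; apply cl_mono. intros v Hv. right; apply HlY; auto.
    + rewrite length_app. lia.
  - intros (dJ & dS & dU & dI & HJ & HS' & HU' & HI & Heq).
    assert (Hb0 : forall l, freeC L (fun _ : P => False) l -> length l <= length m0)
      by (intros; eapply Hbound; eauto).
    destruct (ext L Hex (fun x => S x /\ U x) (fun _ => False) _ Hb0 [] I (fun z H => match H with end))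
      as (lI & HfI & HlI1 & HlI2).
    rewrite app_nil_r in HfI, HlI2.
    assert (HclI : forall x, closure L (fun z => In z lI) x <-> S x /\ U x).
    { intro x; split. apply (cl_least L _ (fun x => S x /\ U x)); [apply subspace_inter; auto| auto].
      intro H; specialize (HlI2 x H); revert HlI2; apply cl_mono; sset. }
    assert (HlenI := dim_eq L _ _ _ (dim_free L Hex lI _ HfI HclI) HI).
    destruct (ext L Hex S (fun _ => False) _ Hb0 lI HfI (fun z Hz => proj1 (HlI1 z Hz)))
      as (a & Hfa & Ha1 & Ha2).
    assert (HclS : forall x, closure L (fun z => In z (a ++ lI)) x <-> S x).
    { intro x; split.
      - apply (cl_least L _ S); auto. intros z Hz; rewrite in_app_iff in Hz;
          destruct Hz as [Hz|Hz]; [auto| exact (proj1 (HlI1 z Hz))].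
      - intro H; specialize (Ha2 x H); revert Ha2; apply cl_mono; sset. }
    assert (HlenS := dim_eq L _ _ _ (dim_free L Hex _ _ Hfa HclS) HS').
    destruct (ext L Hex U (fun _ => False) _ Hb0 lI HfI (fun z Hz => proj2 (HlI1 z Hz)))
      as (c & Hfc & Hc1 & Hc2).
    assert (HclU : forall x, closure L (fun z => In z (c ++ lI)) x <-> U x).
    { intro x; split.
      - apply (cl_least L _ U); auto. intros z Hz; rewrite in_app_iff in Hz;
          destruct Hz as [Hz|Hz]; [auto| exact (proj2 (HlI1 z Hz))].
      - intro H; specialize (Hc2 x H); revert Hc2; apply cl_mono; sset. }
    assert (HlenU := dim_eq L _ _ _ (dim_free L Hex _ _ Hfc HclU) HU').
    assert (HclK : forall x, closure L (fun z => In z (a ++ c ++ lI)) x <-> closure L (fun z => S z \/ U z) x).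
    { intro x; split; apply cl_min.
      - intros z Hz. apply cl_in. rewrite !in_app_iff in Hz.
        destruct Hz as [Hz|[Hz|Hz]]; [left; auto|right; auto| left; exact (proj1 (HlI1 z Hz))].
      - intros z [Hz|Hz]; [apply (proj2 (HclS _)) in Hz | apply (proj2 (HclU _)) in Hz]; revert Hz; apply cl_mono;
          intros w Hw; rewrite !in_app_iff in *; tauto. }
    assert (HlenK : (Z.of_nat (length (a ++ c ++ lI)) = dJ + 1)%Z).
    { rewrite !length_app in *. lia. }
    assert (HfK : freeC L (fun _ => False) (a ++ c ++ lI)).
    { apply NNPP; intro Hnf. destruct (nonfree_short L _ _ Hnf) as (K' & Hlt & Hincl & Hsp).
      destruct HJ as [_ HJm].
      assert ((Z.of_nat (length (a ++ c ++ lI)) <= Z.of_nat (length K'))%Z) as Hle; [|lia].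
      rewrite HlenK; apply HJm. intro x; split; intro H.
      - apply (proj1 (HclK _)); revert H; apply cl_mono; intros w Hw; apply Hincl; auto.
      - apply (proj2 (HclK _)) in H; revert H; apply cl_min; intros w Hw; specialize (Hsp w Hw);
          revert Hsp; apply cl_mono; sset. }
    destruct (ext L Hex (fun _ => True) (fun _ => False) _ Hb0 _ HfK (fun _ _ => I)) as (e & Hfe & _ & He).
    exists (fun x => In x (e ++ a ++ c ++ lI)). split; [split|split].
    + intros (Y & HYB & (x & Hx & HnY) & HYeq). apply (free_elem L _ _ x Hfe Hx).
      assert (H1 : closure L Y x) by (apply (proj2 (HYeq x)), cl_in, Hx).
      revert H1; apply cl_mono. intros w Hw; right; split; [apply HYB; auto| intro; subst; auto].
    + intro x; split; [auto| intros _; specialize (He x I); revert He; apply cl_mono; sset].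
    + exists (fun x => In x (a ++ lI)). split; [|exact HclS].
      intros z Hz; rewrite !in_app_iff in *; tauto.
    + exists (fun x => In x (c ++ lI)). split; [|exact HclU].
      intros z Hz; rewrite !in_app_iff in *; tauto.
Qed.
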